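(* Tangle learning, i.e. the algorithm $\mathtt{solve}$ (defined in the context), runs in time $O(dnm\lvert T\rvert+dn^2\lvert T\rvert^2)$ on a parity game with $d$ priorities, $n$ vertices and $m$ edges, where $\lvert T\rvert$ is the number of learned tangles.
   Context: Parity games: $\mathcal{G}=(V_0,V_1,E,\mathrm{pr})$, $V=V_0\cup V_1$ finite, partitioned into vertices of Even ($0$) and Odd ($1$); $E\subseteq V\times V$ with every vertex having a successor; $\mathrm{pr}:V\to\{0,\dots,d\}$. $E(u)=\{v:(u,v)\in E\}$, $\mathrm{pr}(U)=\max_{u\in U}\mathrm{pr}(u)$, $\mathrm{pr}^{-1}(p)$ the set of vertices of priority $p$, $\overline{\alpha}=1-\alpha$. A cycle is won by $\alpha$ if its highest priority has parity $\alpha$. A strategy of $\alpha$ is a partial function $\sigma$ on $V_\alpha$ with $\sigma(v)\in E(v)$. For $U\subseteq V$, $\mathcal{G}\setminus U$ is the subgame with vertices $V\setminus U$ and edges $E\cap((V\setminus U)\times(V\setminus U))$. A $p$-tangle is a nonempty $U\subseteq V$ with $p=\mathrm{pr}(U)$ such that for $\alpha\equiv p\pmod 2$ there is a strategy $\sigma:U\cap V_\alpha\to U$ (witness strategy $\sigma_T(U)$) with $(U,E\cap(\sigma\cup((U\cap V_{\overline{\alpha}})\times U)))$ strongly connected and all its cycles won by $\alpha$. For a tangle $t$ won by $\alpha$ in a game with edge set $E$, $E_T(t)=\{v\notin t:\exists u\in t\cap V_{\overline{\alpha}},(u,v)\in E\}$; $T_\alpha$ denotes the tangles of $T$ won by $\alpha$;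 for a subgame $\mathcal{G}'$, $T\cap\mathcal{G}'$ denotes the tangles of $T$ contained in its vertex set. Standard attractor $\mathit{Attr}^{\mathcal{G}}_\alpha(A)$: least $Z\supseteq A$ containing every $v\in V_\alpha$ with $E(v)\cap Z\neq\emptyset$ and every $v\in V_{\overline{\alpha}}$ with $E(v)\subseteq Z$, with a strategy mapping attracted $\alpha$-vertices into $Z$. Tangle attractor $\mathit{TAttr}^{\mathcal{G},T}_\alpha(A)$: least $Z\supseteq A$ closed under these rules and containing every vertex of every $t\in T_\alpha$ with $\emptyset\neq E_T(t)\subseteq Z$; its strategy additionally gives $\alpha$-vertices of an attracted tangle $t$ not yet having a strategy their value under $\sigma_T(t)$. extract-tangles$(Z,\sigma)$, for a subgame $\mathcal{G}'=(V',E')$ with top priority $p$, $\alpha\equiv p$, region $Z$ and strategy $\sigma$: let $Y_Z$ be the greatest $X\subseteq Z$ with every $v\in X\cap V_{\overline{\alpha}}$ having $E'(v)\subseteq X$ and every $v\in X\cap V_\alpha$ having $\sigma(v)\in X$; return the bottom strongly connected components containing at least one edge of the graph on $Y_Z$ with edges $(v,\sigma(v))$ for $v\in Y_Z\cap V_\alpha$ and $E'$-edges from $v\in Y_Z\cap V_{\overline{\alpha}}$; these are the learned tangles. $\mathtt{search}(\mathcal{G},T)$: repeat forever: $r:=\emptyset$, $Y:=\emptyset$; while $V\setminus\mathrm{dom}(r)\neq\emptyset$: $\mathcal{G}':=\mathcal{G}\setminus\mathrm{dom}(r)$, $T':=T\cap\mathcal{G}'$, $p:=\mathrm{pr}(\mathcal{G}')$,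 $\alpha:=p\bmod 2$, $(Z,\sigma):=\mathit{TAttr}^{\mathcal{G}',T'}_\alpha(\mathrm{pr}^{-1}(p)\cap V')$, $A:=$ extract-tangles$(Z,\sigma)$; if some $t\in A$ has $E_T(t)=\emptyset$ in $\mathcal{G}$, return $(T\cup Y,t)$; else $r(v):=p$ for $v\in Z$, $Y:=Y\cup A$. After the while-loop, $T:=T\cup Y$. $\mathtt{solve}(\mathcal{G})$: $W_0=W_1=\emptyset$, $\sigma_0=\sigma_1=\emptyset$, $T=\emptyset$; while $\mathcal{G}$ has a vertex: $(T,d):=\mathtt{search}(\mathcal{G},T)$; $\alpha:=\mathrm{pr}(d)\bmod 2$; $(D,\sigma):=\mathit{Attr}^{\mathcal{G}}_\alpha(d)$; $W_\alpha:=W_\alpha\cup D$; $\sigma_\alpha:=\sigma_\alpha\cup\sigma_T(d)\cup\sigma$; $\mathcal{G}:=\mathcal{G}\setminus D$; $T:=$ tangles of $T$ inside the remaining vertex set. Return $W_0,W_1,\sigma_0,\sigma_1$. *)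

(* Defs.v *)
From mathcomp Require Import all_boot.
Set Implicit Arguments. Unset Strict Implicit. Unset Printing Implicit Defensive.

(* A parity game on the finite vertex type V.  [owner v = false] : v is a
   vertex of Even (V_0); [owner v = true] : v is a vertex of Odd (V_1).
   Player alpha is represented by a bool, alpha = odd p for priority p. *)
Record game (V : finType) := Game {
  owner : V -> bool;
  edge  : rel V;
  prio  : V -> nat }.

Definition game_total (V : finType) (G : game V) := forall v, exists w, edge G v w.

Definition strat (V : finType) := V -> option V.

Section TangleLearning.
Variables (V : finType) (G : game V).
(* Choice oracles resolving the nondeterminism of the algorithm:
   [ch v S] is the successor chosen for v among the candidates S,
   [chT D] is the dominion chosen among the candidates D. *)
Variable ch : V -> {set V} -> V.
Variable chT : {set {set V}} -> {set V}.

(* A subgame is given by its vertex set W (edges: E restricted to W x W). *)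
Definition succ (W : {set V}) (v : V) : {set V} := [set w in W | edge G v w].
Definition nedges (W : {set V}) : nat :=
  #|[set p : V * V | (p.1 \in W) && (p.2 \in W) && edge G p.1 p.2]|.
Definition maxpr (U : {set V}) : nat := \max_(v in U) prio G v.

Definition escapes (W t : {set V}) : {set V} :=
  [set v in W | (v \notin t) &&
     [exists u in t, (owner G u != odd (maxpr t)) && edge G u v]].

Definition attr_std (a : bool) (W Z : {set V}) : {set V} :=
  [set v in W | (v \notin Z) &&
     (if owner G v == a then succ W v :&: Z != set0 else succ W v \subset Z)].

Definition attr_tang (a : bool) (W : {set V}) (Tp : {set {set V}}) (Z : {set V})
  : {set {set V}} :=
  [set t in Tp | [&& odd (maxpr t) == a, escapes W t != set0 &
                     escapes W t \subset Z]].

Definition tattr_step (a : bool) (W : {set V}) (Tp : {set {set V}})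
  (wit : {set V} -> strat V) (p : {set V} * strat V) : {set V} * strat V :=
  let: (Z, s) := p in
  let N := attr_std a W Z in
  let Ts := attr_tang a W Tp Z in
  (Z :|: N :|: \bigcup_(t in Ts) t,
   fun v => if s v is Some w then Some w else
            if owner G v != a then None else
            if v \in N then Some (ch v (succ W v :&: Z)) else
            obind (fun t => wit t v) [pick t in Ts | v \in t]).

(* TAttr^{W,Tp}_a(A): iterate to the least fixpoint (|V| rounds suffice);
   attracted alpha-vertices map to previously attracted vertices, attracted
   tangles' alpha-vertices without a strategy get the witness strategy. *)
Definition tattr (a : bool) (W : {set V}) (Tp : {set {set V}})
  (wit : {set V} -> strat V) (A : {set V}) : {set V} * strat V :=
  let: (Z, s) := iter #|V| (tattr_step a W Tp wit) (A, fun _ => None) in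
  (Z, fun v => if s v is Some w then Some w else
               if (v \in A) && (owner G v == a) && (succ W v :&: Z != set0)
               then Some (ch v (succ W v :&: Z)) else None).

Definition ygfp (a : bool) (W Z : {set V}) (s : strat V) : {set V} :=
  iter #|V| (fun X : {set V} => [set v in X | if owner G v == a
                                    then (if s v is Some w then w \in X else false)
                                    else succ W v \subset X]) Z.

Definition egraph (a : bool) (W Y : {set V}) (s : strat V) : rel V :=
  fun u w => [&& u \in Y, w \in Y &
               if owner G u == a then s u == Some w else edge G u w && (w \in W)].

Definition scc (g : rel V) (u : V) : {set V} := [set w | connect g u w && connect g w u].

Definition extract (a : bool) (W Z : {set V}) (s : strat V) : {set {set V}} :=
  let Y := ygfp a W Z s in
  let g := egraph a W Y s in
  [set C : {set V} | [&& [exists u in Y, C == scc g u],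
                         [forall x in C, forall y, g x y ==> (y \in C)] &
                         [exists x in C, exists y, g x y]]].

(* ---------- cost model (charges of a standard linear-size implementation) ---------- *)
Definition tattr_cost (W : {set V}) (Tp : {set {set V}}) : nat :=
  #|W| + nedges W + \sum_(t in Tp) (#|t| + \sum_(u in t) #|succ W u|).
Definition extract_cost (W : {set V}) : nat := #|W| + nedges W.
Definition esc_cost (Wg : {set V}) (A : {set {set V}}) : nat :=
  \sum_(t in A) (#|t| + \sum_(u in t) #|succ Wg u|).
Definition merge_cost (Y : {set {set V}}) : nat := \sum_(t in Y) #|t|.

Definition upd_wit (wit : {set V} -> strat V) (A : {set {set V}}) (s : strat V)
  : {set V} -> strat V := fun t => if t \in A then s else wit t.

Inductive sres :=
| SDom of {set {set V}} & ({set V} -> strat V) & {set V} & nat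
| SDone of {set {set V}} & ({set V} -> strat V) & nat.

(* the inner while-loop; dom = dom(r) *)
Fixpoint sweep (k : nat) (Wg : {set V}) (T : {set {set V}}) (wit : {set V} -> strat V)
  (dom : {set V}) (Y : {set {set V}}) (witY : {set V} -> strat V) (c : nat)
  : option sres :=
  if Wg :\: dom == set0 then Some (SDone Y witY c) else
  match k with
  | 0 => None
  | k'.+1 =>
    let W' := Wg :\: dom in
    let T' := [set t in T | t \subset W'] in
    let p := maxpr W' in
    let a := odd p in
    let A0 := [set v in W' | prio G v == p] in
    let: (Z, s) := tattr a W' T' wit A0 in
    let A := extract a W' Z s in
    let c' := c + tattr_cost W' T' + extract_cost W' + esc_cost Wg A in
    let D := [set t in A | escapes Wg t == set0] in
    if D != set0 then Some (SDom Y witY (chT D) c')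
    else sweep k' Wg T wit (dom :|: Z) (Y :|: A) (upd_wit witY A s) c'
  end.

Definition merge (T : {set {set V}}) (wit : {set V} -> strat V)
  (Y : {set {set V}}) (witY : {set V} -> strat V) :=
  (T :|: Y, fun t => if t \in T then wit t else witY t).

(* search(G,T): returns new T, witnesses, dominion, accumulated cost,
   accumulated set of all learned tangles *)
Fixpoint search (k : nat) (Wg : {set V}) (T : {set {set V}}) (wit : {set V} -> strat V)
  (c : nat) (learned : {set {set V}})
  : option ({set {set V}} * ({set V} -> strat V) * {set V} * nat * {set {set V}}) :=
  match k with
  | 0 => None
  | k'.+1 =>
    match sweep k Wg T wit set0 set0 (fun _ _ => None) 0 with
    | None => None
    | Some (SDom Y witY t c1) =>
        let: (T2, wit2) := merge T wit Y witY in
        Some (T2, wit2, t, c + c1 + merge_cost Y, learned :|: Y)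
    | Some (SDone Y witY c1) =>
        let: (T2, wit2) := merge T wit Y witY in
        search k' Wg T2 wit2 (c + c1 + merge_cost Y) (learned :|: Y)
    end
  end.

(* returns (total cost, set of all learned tangles) *)
Fixpoint solve_loop (k : nat) (Wg : {set V}) (T : {set {set V}})
  (wit : {set V} -> strat V) (c : nat) (learned : {set {set V}})
  : option (nat * {set {set V}}) :=
  if Wg == set0 then Some (c, learned) else
  match k with
  | 0 => None
  | k'.+1 =>
    match search k Wg T wit c learned with
    | None => None
    | Some (T1, wit1, dm, c1, l1) =>
        let a := odd (maxpr dm) in
        let D := (tattr a Wg set0 wit1 dm).1 in
        let Wg' := Wg :\: D in
        let c2 := c1 + #|Wg| + nedges Wg + merge_cost T1 in
        solve_loop k' Wg' [set t in T1 | t \subset Wg'] wit1 c2 l1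
    end
  end.

Definition solve (k : nat) : option (nat * {set {set V}}) :=
  solve_loop k setT set0 (fun _ _ => None) 0 set0.

End TangleLearning.

(* Main.v *)
Require Import Defs.
From mathcomp Require Import all_boot zify.
Set Implicit Arguments. Unset Strict Implicit. Unset Printing Implicit Defensive.

Lemma ohead_filter_eq (T : eqType) (s : seq T) (P Q : pred T) x y :
  ohead (filter P s) = Some x -> ohead (filter Q s) = Some y -> P y -> Q x -> x = y.
Proof.
elim: s => [//|z s IH] /=.
case Pz: (P z); case Qz: (Q z) => /=.
- by move=> [<-] [<-].
- by move=> [<-] _ _; rewrite Qz.
- by move=> _ [<-]; rewrite Pz.
- exact: IH.
Qed.

Lemma pick_eq (T : finType) (P Q : pred T) x y :
  pick P = Some x -> pick Q = Some y -> P y -> Q x -> x = y.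
Proof.
rewrite /pick /enum_mem => hx hy Py Qx.
apply: (ohead_filter_eq hx hy); by rewrite ?inE /=.
Qed.

Lemma pick_someP (T : finType) (P : pred T) x : pick P = Some x -> P x.
Proof. by case: pickP => // y Py [<-]. Qed.

Lemma connect_ind (T : finType) (e : rel T) (P : pred T) x y :
  connect e x y -> P x -> (forall a b, P a -> e a b -> P b) -> P y.
Proof.
move=> /connectP [p pth ->] Px H.
elim: p x pth Px => [//|z p IH] x /= /andP[exz pth] Px.
apply: IH pth _; exact: H exz.
Qed.

Lemma iter_infl_fix (T : finType) (F : {set T} -> {set T}) (X0 : {set T}) :
  (forall X : {set T}, X \subset F X) -> F (iter #|T| F X0) = iter #|T| F X0.
Proof.
move=> infl.
have H : forall i, F (iter i F X0) = iter i F X0 \/ i <= #|iter i F X0|.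
  elim=> [|i [IH|IH]]; first by right.
  - by left; rewrite /= IH.
  - have [E|NE] := eqVneq (F (iter i F X0)) (iter i F X0).
      by left; rewrite /= E.
    right; rewrite /=.
    have pr : iter i F X0 \proper F (iter i F X0).
      by rewrite properEneq eq_sym NE infl.
    by apply: leq_ltn_trans IH (proper_card pr).
case: (H #|T|) => // le.
have E : iter #|T| F X0 = setT.
  apply/eqP; rewrite eqEcard subsetT cardsT; exact: le.
by rewrite E; apply/eqP; rewrite eqEsubset subsetT infl.
Qed.

Lemma iter_defl_fix (T : finType) (F : {set T} -> {set T}) (X0 : {set T}) :
  (forall X : {set T}, F X \subset X) -> F (iter #|T| F X0) = iter #|T| F X0.
Proof.
move=> defl.
have H : forall i, F (iter i F X0) = iter i F X0 \/ i + #|iter i F X0| <= #|T|.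
  elim=> [|i [IH|IH]]; first by right; rewrite add0n max_card.
  - by left; rewrite /= IH.
  - have [E|NE] := eqVneq (F (iter i F X0)) (iter i F X0).
      by left; rewrite /= E.
    right; rewrite /=.
    have pr : F (iter i F X0) \proper iter i F X0.
      by rewrite properEneq NE defl.
    have := proper_card pr; move=> h2; apply: leq_trans IH; by rewrite addSnnS leq_add2l.
case: (H #|T|) => // le.
have E : iter #|T| F X0 = set0.
  apply/eqP; rewrite -cards_eq0 -leqn0 -(leq_add2l #|T|) addn0; exact: le.
by rewrite E; apply/eqP; rewrite eqEsubset sub0set andbT defl.
Qed.
Section Region.
Variables (V : finType) (G : game V) (ch : V -> {set V} -> V).
Hypothesis chP : forall v S, S != set0 -> ch v S \in S.

Definition total (W : {set V}) := forall v, v \in W -> succ G W v != set0.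

Definition tedge (t : {set V}) (w : strat V) : rel V := fun x y =>
  [&& x \in t, y \in t & if owner G x == odd (maxpr G t) then w x == Some y else edge G x y].

Definition tangle_ok (t : {set V}) (w : strat V) :=
  [/\ t != set0,
      forall v, v \in t -> owner G v == odd (maxpr G t) -> exists2 y, w v = Some y & y \in t &
      forall (S : {set V}) v, v \in t -> v \in S ->
         (forall x y, x \in S -> tedge t w x y -> y \in S) -> t \subset S].

Variables (a : bool) (W : {set V}) (Tp : {set {set V}}) (wit : {set V} -> strat V) (A : {set V}).
Hypothesis TpW : forall t, t \in Tp -> t \subset W.
Hypothesis AW : A \subset W.

Definition Gz (Z : {set V}) := Z :|: attr_std G a W Z :|: \bigcup_(t in attr_tang G a W Tp Z) t.

Definition Zs i := iter i (tattr_step G ch a W Tp wit) (A, fun _ => None).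

Lemma Zs_S i : Zs i.+1 = tattr_step G ch a W Tp wit (Zs i).
Proof. by []. Qed.

Lemma Zs_fst i : (Zs i).1 = iter i Gz A.
Proof. elim: i => [//|i IH]; rewrite Zs_S /= -IH; by case: (Zs i). Qed.

Lemma Zs_fstS i : (Zs i.+1).1 = Gz (Zs i).1.
Proof. by rewrite !Zs_fst. Qed.

Lemma Zs_snd i v : (Zs i.+1).2 v =
  if (Zs i).2 v is Some w then Some w else
  if owner G v != a then None else
  if v \in attr_std G a W (Zs i).1 then Some (ch v (succ G W v :&: (Zs i).1)) else
  obind (fun t => wit t v) [pick t in attr_tang G a W Tp (Zs i).1 | v \in t].
Proof. by rewrite Zs_S; case: (Zs i). Qed.

Lemma tattrE : tattr G ch a W Tp wit A =
  ((Zs #|V|).1, fun v => if (Zs #|V|).2 v is Some w then Some w else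
               if (v \in A) && (owner G v == a) && (succ G W v :&: (Zs #|V|).1 != set0)
               then Some (ch v (succ G W v :&: (Zs #|V|).1)) else None).
Proof. by rewrite /tattr -/(Zs #|V|); case: (Zs #|V|). Qed.

Lemma Gz_infl (Z : {set V}) : Z \subset Gz Z.
Proof. by rewrite /Gz -setUA subsetUl. Qed.

Lemma Gz_sub (Z : {set V}) : Z \subset W -> Gz Z \subset W.
Proof.
move=> ZW; rewrite /Gz !subUset ZW /=; apply/andP; split.
  by apply/subsetP=> v; rewrite inE => /andP[].
apply/bigcupsP=> t; rewrite inE => /andP[tT _]; exact: TpW.
Qed.

Lemma Zs_W i : (Zs i).1 \subset W.
Proof. rewrite Zs_fst; elim: i => [//|i IH] /=; exact: Gz_sub. Qed.

Lemma Zs_mono i j : i <= j -> (Zs i).1 \subset (Zs j).1.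
Proof.
move=> /subnK <-; elim: (j - i) => [|k IH]; first by rewrite add0n.
apply: subset_trans IH _; rewrite addSn !Zs_fst /=; exact: Gz_infl.
Qed.

Lemma Zs_A i : A \subset (Zs i).1.
Proof. exact: (Zs_mono (leq0n i)). Qed.

Lemma Zs_dom i v : (Zs i).2 v != None -> v \in (Zs i).1.
Proof.
elim: i v => [//|i IH] v; rewrite Zs_snd.
have sub := Zs_mono (leqnSn i).
case E: ((Zs i).2 v) => [w|].
  by move=> _; apply: (subsetP sub); apply: IH; rewrite E.
case: (owner G v != a) => //.
rewrite Zs_fstS.
case: ifP => [vN _|_]; first by rewrite /Gz; apply/setUP; left; apply/setUP; right.
case: pickP => [t /andP[tT vt]|] //= _.
by rewrite /Gz; apply/setUP; right; apply/bigcupP; exists t.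
Qed.

Lemma Zs_snd_mono i j v w : i <= j -> (Zs i).2 v = Some w -> (Zs j).2 v = Some w.
Proof.
move=> /subnK <-; elim: (j - i) => [|k IH]; first by rewrite add0n.
by move=> h; rewrite addSn Zs_snd (IH h).
Qed.

Hypothesis Tok : forall t, t \in Tp -> tangle_ok t (wit t).

Definition Zf := (Zs #|V|).1.
Definition sf := (tattr G ch a W Tp wit A).2.

Lemma tattr1 : (tattr G ch a W Tp wit A).1 = Zf.
Proof. by rewrite tattrE. Qed.

Lemma Zf_fix : Gz Zf = Zf.
Proof. rewrite /Zf Zs_fst; exact: iter_infl_fix Gz_infl. Qed.

Lemma Zf_W : Zf \subset W.
Proof. exact: Zs_W. Qed.

Lemma Zf_A : A \subset Zf.
Proof. exact: Zs_A. Qed.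

Lemma sf_mono i v w : i <= #|V| -> (Zs i).2 v = Some w -> sf v = Some w.
Proof. by move=> le h; rewrite /sf tattrE /= (Zs_snd_mono le h). Qed.

Lemma Zf_std v : v \in W -> v \notin Zf ->
  if owner G v == a then succ G W v :&: Zf == set0 else ~~ (succ G W v \subset Zf).
Proof.
move=> vW vZ.
have: v \notin attr_std G a W Zf.
  apply/negP=> vN; move: vZ; rewrite -Zf_fix /Gz; apply/negP/negPn.
  by apply/setUP; left; apply/setUP; right.
rewrite inE vW vZ /=; case: (owner G v == a) => //; by move/negPn.
Qed.

Lemma Zf_tang t : t \in Tp -> odd (maxpr G t) == a -> escapes G W t != set0 ->
  escapes G W t \subset Zf -> t \subset Zf.
Proof.
move=> tT odt ne sub; rewrite -Zf_fix /Gz.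
apply/subsetP=> v vt; apply/setUP; right; apply/bigcupP; exists t => //.
by rewrite inE tT odt ne sub.
Qed.

Lemma Zs_strat i v : v \in (Zs i).1 -> owner G v == a ->
  (exists2 w, (Zs i).2 v = Some w & w \in (Zs i).1) \/ (v \in A /\ (Zs i).2 v = None).
Proof.
elim: i v => [|i IH] v; first by move=> vA _; right.
move=> vZ ova.
have sub := Zs_mono (leqnSn i).
rewrite Zs_snd.
case E: ((Zs i).2 v) => [w|].
  have vZi : v \in (Zs i).1 by apply: Zs_dom; rewrite E.
  case: (IH v vZi ova) => [[w' E' w'Z]|[_ E']]; last by rewrite E' in E.
  by left; exists w => //; rewrite E' in E; case: E => <-; apply: (subsetP sub).
rewrite ova /=.
case: ifP => [vN|vN].
  left; exists (ch v (succ G W v :&: (Zs i).1)) => //.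
  apply: (subsetP sub); move: vN; rewrite inE ova => /and3P[_ _ ne].
  by have := chP v ne; rewrite inE => /andP[].
case: pickP => [t /andP[tT vt]|none] /=.
  move: (tT); rewrite inE => /and3P[tTp odt _].
  have [_ hs _] := Tok tTp.
  have ov : owner G v == odd (maxpr G t) by rewrite (eqP odt).
  have [y -> yt] := hs v vt ov.
  left; exists y => //; rewrite Zs_fstS /Gz; apply/setUP; right; apply/bigcupP; exists t => //.
right; split=> //.
move: vZ; rewrite Zs_fstS /Gz => /setUP[/setUP[vZi|]|]; last 2 first.
- by rewrite vN.
- by case/bigcupP=> t tT vt; have := none t; rewrite tT vt.
by case: (IH v vZi ova) => [[w' E']|[]//]; rewrite E' in E.
Qed.

Definition FY (X : {set V}) : {set V} := [set v in X | if owner G v == a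
       then (if sf v is Some w then w \in X else false)
       else succ G W v \subset X].

Definition Y := ygfp G a W Zf sf.

Lemma YE : Y = iter #|V| FY Zf.
Proof. by []. Qed.

Lemma FY_defl X : FY X \subset X.
Proof. by apply/subsetP=> v; rewrite inE => /andP[]. Qed.

Lemma Y_fix : FY Y = Y.
Proof. rewrite YE; exact: iter_defl_fix FY_defl. Qed.

Lemma Y_sub : Y \subset Zf.
Proof. rewrite YE; elim: #|V| => [//|i IH] /=; exact: subset_trans (FY_defl _) IH. Qed.

Lemma Y_cond v : v \in Y -> if owner G v == a
       then (if sf v is Some w then w \in Y else false)
       else succ G W v \subset Y.
Proof. by rewrite -{1}Y_fix inE => /andP[]. Qed.

Lemma Y_a v : v \in Y -> owner G v == a -> exists2 w, sf v = Some w & w \in Y.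
Proof. move/Y_cond=> h ova; rewrite ova in h; case: (sf v) h => // w; by exists w. Qed.

Lemma Y_na v : v \in Y -> owner G v != a -> succ G W v \subset Y.
Proof. move/Y_cond=> h /negbTE ova; by rewrite ova in h. Qed.

Lemma Y_big (X : {set V}) : X \subset Zf -> X \subset FY X -> X \subset Y.
Proof.
move=> XZ XF; rewrite YE; elim: #|V| => [//|i IH] /=.
apply/subsetP=> v vX; have := subsetP XF v vX; rewrite !inE => /andP[_ c].
rewrite (subsetP IH v vX) /=.
case: (owner G v == a) c; first by case: (sf v) => // w wX; exact: (subsetP IH).
move=> sX; exact: subset_trans IH.
Qed.

Definition g := egraph G a W Y sf.

Lemma gE x y : g x y = [&& x \in Y, y \in Y &
               if owner G x == a then sf x == Some y else edge G x y && (y \in W)].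
Proof. by []. Qed.

Lemma g_a x y : x \in Y -> owner G x == a -> sf x = Some y -> g x y.
Proof.
move=> xY ova E; have [w E' wY] := Y_a xY ova.
by rewrite gE xY ova E /=; rewrite E in E'; case: E' => ->; rewrite wY eqxx.
Qed.

Lemma g_na x y : x \in Y -> owner G x != a -> y \in succ G W x -> g x y.
Proof.
move=> xY ova ys; rewrite gE xY (subsetP (Y_na xY ova) y ys) (negbTE ova) /=.
by move: ys; rewrite inE => /andP[-> ->].
Qed.

Definition Ext := extract G a W Zf sf.

Lemma ExtE C : C \in Ext = [&& [exists u in Y, C == scc g u],
                         [forall x in C, forall y, g x y ==> (y \in C)] &
                         [exists x in C, exists y, g x y]].
Proof. by rewrite inE. Qed.

Lemma Ext_closed C x y : C \in Ext -> x \in C -> g x y -> y \in C.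
Proof.
rewrite ExtE => /and3P[_ /forall_inP h _] xC gxy.
by have := h x xC => /forallP/(_ y); rewrite gxy.
Qed.

Lemma Ext_scc C : C \in Ext -> exists2 u, u \in Y & C = scc g u.
Proof. by rewrite ExtE => /and3P[/exists_inP[u uY /eqP ->] _ _]; exists u. Qed.

Lemma Ext_ne C : C \in Ext -> exists2 x, x \in C & exists y, g x y.
Proof. rewrite ExtE => /and3P[_ _ /exists_inP[x xC /existsP[y gy]]]; exists x => //; by exists y. Qed.

Lemma Ext_Y C : C \in Ext -> C \subset Y.
Proof.
move=> CE; have [u uY ->] := Ext_scc CE.
apply/subsetP=> w; rewrite inE => /andP[cuw _].
apply: (connect_ind (P := fun z => z \in Y) cuw) => // x y _.
by rewrite gE => /and3P[].
Qed.

Lemma Ext_W C : C \in Ext -> C \subset W.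
Proof. move/Ext_Y=> h; exact: subset_trans h (subset_trans Y_sub Zf_W). Qed.

Lemma Zs_none i v : v \notin (Zs i).1 -> (Zs i).2 v = None.
Proof. move=> vZ; case E: ((Zs i).2 v) => [w|] //; have := @Zs_dom i v; rewrite E (negbTE vZ); by move/(_ isT). Qed.

Lemma Ext_A (HW : total W) C : C \in Ext -> exists2 v, v \in C & v \in A.
Proof.
move=> CE.
case: (boolP [exists v in C, v \in A]) => [/exists_inP[v ? ?]|none]; first by exists v.
exfalso.
have CY := Ext_Y CE.
have [x0 x0C _] := Ext_ne CE.
pose P i := [exists v in C, v \in (Zs i).1].
have PN : P #|V| by apply/exists_inP; exists x0 => //; exact: (subsetP Y_sub) (subsetP CY x0 x0C).
have exP : exists i, P i by exists #|V|.
case: (ex_minnP exP) => i0 Pi0 min.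
have le0 : i0 <= #|V| := min _ PN.
case: i0 Pi0 min le0 => [|i] Pi min le.
  by rewrite /P /= in Pi; rewrite Pi in none.
have nPi : ~~ P i by apply/negP=> Pi'; have := min i Pi'; rewrite ltnn.
have F1 : forall v, v \in C -> v \notin (Zs i).1.
  move=> v vC; apply/negP=> vZ; move: nPi; apply/negP/negPn/exists_inP; by exists v.
have F2 : forall v w, (Zs i.+1).2 v = Some w -> sf v = Some w := fun v w => sf_mono le.
have F3 : forall v, v \in C -> v \notin attr_std G a W (Zs i).1.
  move=> v vC; apply/negP=> vN.
  have vY := subsetP CY v vC.
  move: (vN); rewrite inE => /and3P[vW vZ].
  case: ifP => ova.
  - move=> ne.
    have E : (Zs i.+1).2 v = Some (ch v (succ G W v :&: (Zs i).1)).
      by rewrite Zs_snd (Zs_none vZ) ova /= vN.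
    have := chP v ne; rewrite inE => /andP[_ wZ].
    have gvw := g_a vY ova (F2 _ _ E).
    by have := F1 _ (Ext_closed CE vC gvw); rewrite wZ.
  - move=> sub. have ova' : owner G v != a by rewrite ova.
    have := HW v vW; case/set0Pn => w ws.
    have gvw := g_na vY ova' ws.
    by have := F1 _ (Ext_closed CE vC gvw); rewrite (subsetP sub w ws).
case/exists_inP: Pi => v vC.
rewrite Zs_fstS /Gz => /setUP[/setUP[vZi|vN]|vT].
- by have := F1 v vC; rewrite vZi.
- by have := F3 v vC; rewrite vN.
case/bigcupP: vT => t0 t0T vt0.
set Ts := attr_tang G a W Tp (Zs i).1 in t0T *.
have [tj Etj] : exists tj, [pick t | (t \in Ts) && (t :&: C != set0)] = Some tj.
  case: pickP => [tj _|none']; first by exists tj.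
  have := none' t0; rewrite /= t0T /=; move/negbT/negPn => /eqP/setP/(_ v).
  by rewrite !inE vt0 vC.
have /andP[tjT tjC] := pick_someP Etj.
move: (tjT); rewrite inE => /andP[tjTp /and3P[odt ne sub]].
have tjsub : tj \subset C.
  have [_ _ hcl] := Tok tjTp.
  case/set0Pn: tjC => v0; rewrite inE => /andP[v0tj v0C].
  apply: (hcl C v0 v0tj v0C) => x y xC.
  rewrite /tedge => /and3P[xtj ytj br].
  have xY := subsetP CY x xC.
  case: (boolP (owner G x == a)) => ova.
  - rewrite (eqP odt) ova in br.
    have xN := F3 x xC.
    have [tk Etk] : exists tk, [pick t in Ts | x \in t] = Some tk.
      case: pickP => [tk _|none']; first by exists tk.
      by have := none' tj; rewrite /= tjT xtj.
    have /andP[tkT xtk] := pick_someP Etk.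
    have ekj : tj = tk.
      apply: (pick_eq Etj Etk); rewrite /= ?tkT ?tjT ?xtj //=.
      by apply/set0Pn; exists x; rewrite inE xtk xC.
    have E : (Zs i.+1).2 x = Some y.
      by rewrite Zs_snd (Zs_none (F1 x xC)) ova /= (negbTE xN) Etk /= -ekj (eqP br).
    exact: Ext_closed CE xC (g_a xY ova (F2 _ _ E)).
  - have h : (owner G x == odd (maxpr G tj)) = false by rewrite (eqP odt) (negbTE ova).
    rewrite h in br.
    apply: Ext_closed CE xC (g_na xY ova _).
    by rewrite inE (subsetP (TpW tjTp) y ytj) br.
case/set0Pn: ne => e eE.
move: (eE); rewrite inE => /andP[eW /andP[etj /exists_inP[u utj /andP[ou eu]]]].
have uC := subsetP tjsub u utj.
have oua : owner G u != a by rewrite -(eqP odt).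
have es : e \in succ G W u by rewrite inE eW eu.
have eC := Ext_closed CE uC (g_na (subsetP CY u uC) oua es).
by have := F1 e eC; rewrite (subsetP sub e eE).
Qed.

Lemma maxpr_eq (C : {set V}) v : v \in C -> (forall w, w \in C -> prio G w <= prio G v) ->
  maxpr G C = prio G v.
Proof.
move=> vC h; apply/eqP; rewrite eqn_leq; apply/andP; split.
  by apply/bigmax_leqP => w wC; exact: h.
rewrite /maxpr; exact: leq_bigmax_cond.
Qed.

Hypothesis HA : forall v, v \in A -> odd (prio G v) = a /\ (forall w, w \in W -> prio G w <= prio G v).

Lemma Ext_par (HW : total W) C : C \in Ext -> odd (maxpr G C) = a.
Proof.
move=> CE; have [v vC vA] := Ext_A HW CE.
have [od le] := HA vA.
rewrite (maxpr_eq vC) // => w wC; apply: le; exact: (subsetP (Ext_W CE)).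
Qed.

Lemma Ext_esc (HW : total W) C : C \in Ext -> escapes G W C = set0.
Proof.
move=> CE; apply/eqP; apply/set0Pn => -[e].
rewrite inE => /andP[eW /andP[eC /exists_inP[u uC /andP[ou eu]]]].
rewrite (Ext_par HW CE) in ou.
have es : e \in succ G W u by rewrite inE eW eu.
by have := Ext_closed CE uC (g_na (subsetP (Ext_Y CE) u uC) ou es); rewrite (negbTE eC).
Qed.

Lemma Ext_ok (HW : total W) C : C \in Ext -> tangle_ok C sf.
Proof.
move=> CE; have par := Ext_par HW CE.
split.
- by have [x xC _] := Ext_ne CE; apply/set0Pn; exists x.
- move=> v vC; rewrite par => ova.
  have vY := subsetP (Ext_Y CE) v vC.
  have [w E _] := Y_a vY ova; exists w => //.
  exact: Ext_closed CE vC (g_a vY ova E).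
- move=> S v vC vS cl.
  have [u uY Ceq] := Ext_scc CE.
  apply/subsetP=> y yC.
  have cvy : connect g v y.
    move: (vC) (yC); rewrite Ceq !inE => /andP[_ cvu] /andP[cuy _].
    exact: connect_trans cvu cuy.
  have := connect_ind (P := fun z => (z \in C) && (z \in S)) cvy.
  rewrite vC vS => /(_ isT) h.
  have /andP[//] : (y \in C) && (y \in S).
  apply: h => z z' /andP[zC zS] gz.
  have z'C := Ext_closed CE zC gz.
  rewrite z'C /=; apply: (cl z z' zS).
  rewrite /tedge zC z'C par /=.
  move: gz; rewrite gE => /and3P[_ _].
  by case: (owner G z == a) => // /andP[].
Qed.

Lemma scc_eq (u x : V) : x \in scc g u -> scc g u = scc g x.
Proof.
rewrite inE => /andP[cux cxu]; apply/setP=> w; rewrite !inE.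
apply/andP/andP => -[h1 h2]; split.
- exact: connect_trans cxu h1.
- exact: connect_trans h2 cux.
- exact: connect_trans cux h1.
- exact: connect_trans h2 cxu.
Qed.

Lemma Ext_triv : trivIset Ext.
Proof.
apply/trivIsetP => C1 C2 C1E C2E ne.
rewrite -setI_eq0; apply/eqP/setP => x; rewrite !inE.
apply/negP => /andP[x1 x2]; move/negP: ne; apply.
have [u1 _ E1] := Ext_scc C1E; have [u2 _ E2] := Ext_scc C2E.
rewrite E1 in x1 *; rewrite E2 in x2 *.
by rewrite (scc_eq x1) (scc_eq x2).
Qed.

Lemma Ext_full (HW : total W) : W != set0 -> Zf = W -> Ext != set0.
Proof.
move=> Wne ZW.
have YZ : Y = Zf.
  apply/eqP; rewrite eqEsubset Y_sub /=; apply: Y_big => //.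
  apply/subsetP => v vZ; rewrite inE vZ /=.
  case: ifP => ova; last by rewrite ZW; apply/subsetP => w; rewrite inE => /andP[].
  have vW : v \in W by rewrite -ZW.
  case: (Zs_strat vZ ova) => [[w E wZ]|[vA E]].
    by rewrite (sf_mono (leqnn _) E).
  rewrite /sf tattrE /= E vA ova /=.
  have ne : succ G W v :&: Zf != set0.
    rewrite ZW (setIidPl _); first exact: HW.
    by apply/subsetP => w; rewrite inE => /andP[].
  rewrite ne; have := chP v ne; rewrite inE => /andP[_ ->] //.
case/set0Pn: Wne => u0 u0W.
have u0Y : u0 \in Y by rewrite YZ ZW.
pose reach (u : V) := [set w | connect g u w].
case: (arg_minnP (fun u => #|reach u|) u0Y) => u uY umin.
have gY : forall z z', z \in Y -> g z z' -> z' \in Y by move=> z z' _; rewrite gE => /and3P[].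
have R : forall w, connect g u w -> connect g w u.
  move=> w cuw.
  have wY : w \in Y := connect_ind cuw uY gY.
  have sub : reach w \subset reach u.
    by apply/subsetP => z; rewrite !inE => cwz; exact: connect_trans cuw cwz.
  have := umin w wY; rewrite (geq_leqif (subset_leqif_card sub)) => sub'.
  by have := subsetP sub' u; rewrite !inE connect0 => /(_ isT).
apply/set0Pn; exists (scc g u); rewrite ExtE; apply/and3P; split.
- by apply/exists_inP; exists u.
- apply/forall_inP => x; rewrite inE => /andP[cux _]; apply/forallP => y; apply/implyP => gxy.
  have cuy : connect g u y := connect_trans cux (connect1 gxy).
  by rewrite inE cuy R.
- apply/exists_inP; exists u; first by rewrite inE connect0.
  case: (boolP (owner G u == a)) => ova.
    have [w E _] := Y_a uY ova; apply/existsP; exists w; exact: g_a uY ova E.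
  have uW : u \in W by rewrite -ZW -YZ.
  case/set0Pn: (HW u uW) => w ws; apply/existsP; exists w; exact: g_na uY ova ws.
Qed.

Lemma total_diff (HW : total W) : total (W :\: Zf).
Proof.
move=> v; rewrite inE => /andP[vZ vW].
have h := Zf_std vW vZ.
suff [w ws wZ] : exists2 w, w \in succ G W v & w \notin Zf.
  by apply/set0Pn; exists w; move: ws; rewrite !inE wZ => /andP[-> ->].
case: ifP h => _ h.
  case/set0Pn: (HW v vW) => w ws; exists w => //; apply/negP => wZ.
  by move/eqP/setP: h => /(_ w); move: ws; rewrite !inE => /andP[-> ->]; rewrite wZ.
by case/subsetPn: h => w ws wZ; exists w.
Qed.
End Region.

Section Cost.
Variables (V : finType) (G : game V).

Lemma nedgesE : nedges G setT = \sum_u #|succ G setT u|.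
Proof.
rewrite /nedges.
rewrite -[LHS]sum1_card.
transitivity (\sum_u \sum_(w in succ G setT u) 1).
  rewrite pair_big_dep; apply: eq_bigl => -[u w] /=; by rewrite !inE.
by apply: eq_bigr => u _; rewrite sum1_card.
Qed.

Lemma sum_sub_le (S : {set V}) (f : V -> nat) : \sum_(u in S) f u <= \sum_u f u.
Proof. by rewrite [X in _ <= X](bigID (mem S)) /= leq_addr. Qed.

Lemma succ_card_le (W : {set V}) u : #|succ G W u| <= #|succ G setT u|.
Proof. by apply: subset_leq_card; apply/subsetP => w; rewrite !inE => /andP[_ ->]. Qed.

Lemma sum_succ_le (S W : {set V}) : \sum_(u in S) #|succ G W u| <= nedges G setT.
Proof.
rewrite nedgesE; apply: leq_trans (sum_sub_le S _).
by apply: leq_sum => u _; exact: succ_card_le.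
Qed.

Lemma nedges_le (W : {set V}) : nedges G W <= nedges G setT.
Proof.
apply: subset_leq_card; apply/subsetP => p; rewrite !inE => /andP[/andP[_ _] ->].
by rewrite andbT.
Qed.

Lemma tattr_cost_le (W : {set V}) (Tp : {set {set V}}) :
  tattr_cost G W Tp <= #|Tp|.+1 * (#|V| + nedges G setT).
Proof.
rewrite /tattr_cost mulSn; apply: leq_add; first by rewrite leq_add ?max_card ?nedges_le.
rewrite -sum_nat_const; apply: leq_sum => t _; by rewrite leq_add ?max_card ?sum_succ_le.
Qed.

Lemma extract_cost_le (W : {set V}) : extract_cost G W <= #|V| + nedges G setT.
Proof. by rewrite /extract_cost leq_add ?max_card ?nedges_le. Qed.

Lemma esc_cost_le (Wg : {set V}) (A : {set {set V}}) : trivIset A ->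
  esc_cost G Wg A <= #|V| + nedges G setT.
Proof.
move=> tA; rewrite /esc_cost.
have -> : \sum_(t in A) (#|t| + \sum_(u in t) #|succ G Wg u|) =
          \sum_(t in A) \sum_(u in t) (1 + #|succ G Wg u|).
  by apply: eq_bigr => t _; rewrite big_split /= sum1_card.
rewrite -(@big_trivIset _ _ _ _ A (fun u => 1 + #|succ G Wg u|) tA) /=.
apply: leq_trans (sum_sub_le _ _) _.
rewrite big_split /=; apply: leq_add.
  by rewrite sum_nat_const muln1.
rewrite nedgesE; apply: leq_sum => u _; exact: succ_card_le.
Qed.

Lemma merge_cost_le (Y : {set {set V}}) : merge_cost Y <= #|Y| * #|V|.
Proof. rewrite /merge_cost -sum_nat_const; apply: leq_sum => t _; exact: max_card. Qed.

Lemma n_le_m : (forall v, succ G setT v != set0) -> #|V| <= nedges G setT.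
Proof.
move=> h; rewrite nedgesE -sum1_card; apply: leq_sum => u _.
by rewrite card_gt0.
Qed.

Lemma m_le_n2 : nedges G setT <= #|V| ^ 2.
Proof.
rewrite nedgesE expnS expn1 -sum_nat_const; apply: leq_sum => u _; exact: max_card.
Qed.
End Cost.

Section Algo.
Variables (V : finType) (G : game V) (ch : V -> {set V} -> V) (chT : {set {set V}} -> {set V}).
Hypothesis chP : forall v S, S != set0 -> ch v S \in S.
Hypothesis chTP : forall D, D != set0 -> chT D \in D.

Definition wit_ok (T : {set {set V}}) (wit : {set V} -> strat V) :=
  forall t, t \in T -> tangle_ok G t (wit t).

Definition Inv (Wg : {set V}) (T : {set {set V}}) (dom : {set V}) :=
  forall t, t \in T -> t \subset Wg :\: dom -> escapes G Wg t \subset dom -> escapes G Wg t = set0.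

Lemma maxpr_ex (W : {set V}) : W != set0 -> exists2 v, v \in W & prio G v = maxpr G W.
Proof.
move=> Wne; rewrite /maxpr.
have h : 0 < #|W| by rewrite card_gt0.
have [v vW ->] := eq_bigmax_cond (prio G) h; by exists v.
Qed.

Lemma maxpr_le (W : {set V}) v : v \in W -> prio G v <= maxpr G W.
Proof. move=> vW; rewrite /maxpr; exact: leq_bigmax_cond. Qed.

Lemma escapesE (W t : {set V}) x : x \in escapes G W t =
  (x \in W) && ((x \notin t) && [exists u in t, (owner G u != odd (maxpr G t)) && edge G u x]).
Proof. by rewrite inE. Qed.

Lemma sweepS k Wg T wit dom Y witY c :
  sweep G ch chT k.+1 Wg T wit dom Y witY c =
  if Wg :\: dom == set0 then Some (SDone Y witY c) else
  let W' := Wg :\: dom in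
  let T' := [set t in T | t \subset W'] in
  let p := maxpr G W' in
  let a := odd p in
  let A0 := [set v in W' | prio G v == p] in
  let: (Z, s) := tattr G ch a W' T' wit A0 in
  let A := extract G a W' Z s in
  let c' := c + tattr_cost G W' T' + extract_cost G W' + esc_cost G Wg A in
  let D := [set t in A | escapes G Wg t == set0] in
  if D != set0 then Some (SDom Y witY (chT D) c')
  else sweep G ch chT k Wg T wit (dom :|: Z) (Y :|: A) (upd_wit witY A s) c'.
Proof. by []. Qed.

Lemma tattr_pair a W Tp wit A : tattr G ch a W Tp wit A = (Zf G ch a W Tp wit A, sf G ch a W Tp wit A).
Proof. by rewrite -tattr1 /sf; case: tattr. Qed.

Lemma bool3 (x y z : bool) : x != y -> x != z -> y == z.
Proof. by case: x; case: y; case: z. Qed.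

Lemma sweep_ok Wg T wit l k : forall dom Y witY c b,
  total G (Wg :\: dom) -> Inv Wg T dom -> wit_ok T wit -> wit_ok Y witY ->
  (forall t, t \in Y -> t \subset Wg) ->
  #|Wg :\: dom| < k -> (forall v, v \in Wg :\: dom -> prio G v < b) -> #|T| <= l ->
  exists r, sweep G ch chT k Wg T wit dom Y witY c = Some r /\
   match r with
   | SDone Y' witY' c' => [/\ Y \subset Y', wit_ok Y' witY', (forall t, t \in Y' -> t \subset Wg),
        c' <= c + b * (l.+3 * (#|V| + nedges G setT)) &
        (Wg :\: dom != set0 -> exists2 t, t \in Y' & t \notin T)]
   | SDom Y' witY' t c' => [/\ Y \subset Y', wit_ok Y' witY', (forall t, t \in Y' -> t \subset Wg),
        c' <= c + b * (l.+3 * (#|V| + nedges G setT)) & (t != set0) && (t \subset Wg)]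
   end.
Proof.
elim: k => [|k IH] dom Y witY c b Htot HInv Hwit HwY HYW Hk Hb Hl //.
rewrite sweepS.
case: ifP => [E|NE].
  exists (SDone Y witY c); split=> //.
  by split; [exact: subxx | done | done | rewrite leq_addr | ].
move/negbT: NE => NE.
cbv zeta. rewrite tattr_pair.
set W' := Wg :\: dom in NE *.
set T' := [set t in T | t \subset W'].
set a := odd (maxpr G W').
set A0 := [set v in W' | prio G v == maxpr G W'].
set Zr := Zf G ch a W' T' wit A0.
set sr := sf G ch a W' T' wit A0.
set Ar := extract G a W' Zr sr.
set K := l.+3 * (#|V| + nedges G setT).
have W'Wg : W' \subset Wg by apply/subsetP => v; rewrite inE => /andP[].
have TpW : forall t, t \in T' -> t \subset W' by move=> t; rewrite inE => /andP[].
have AW : A0 \subset W' by apply/subsetP => v; rewrite inE => /andP[].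
have Tok : forall t, t \in T' -> tangle_ok G t (wit t).
  by move=> t; rewrite inE => /andP[tT _]; exact: Hwit.
have HA : forall v, v \in A0 -> odd (prio G v) = a /\ (forall w, w \in W' -> prio G w <= prio G v).
  move=> v; rewrite inE => /andP[vW /eqP pv]; rewrite pv; split => // w wW; exact: maxpr_le.
have ArE : Ar = Ext G ch a W' T' wit A0 by [].
have cost : tattr_cost G W' T' + extract_cost G W' + esc_cost G Wg Ar <= K.
  have h1 := @tattr_cost_le _ G W' T'.
  have h2 := @extract_cost_le _ G W'.
  have h3 := @esc_cost_le _ G Wg Ar (Ext_triv G ch a W' T' wit A0).
  have h4 : #|T'| <= l.
    apply: leq_trans Hl; apply: subset_leq_card; by apply/subsetP => t; rewrite inE => /andP[].
  rewrite /K; move: h1 h2 h3 h4; set N := #|V| + nedges G setT; nia.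
have [v0 v0W pv0] := maxpr_ex NE.
have blt : maxpr G W' < b by rewrite -pv0; exact: Hb.
have Kb : K <= b * K by rewrite leq_pmull // (leq_ltn_trans (leq0n _) blt).
have escW' : forall t, t \in Ar -> escapes G W' t = set0.
  move=> t tA; exact: (Ext_esc chP TpW AW Tok HA (Htot) tA).
have notT : ([set t in Ar | escapes G Wg t == set0] != set0) = false -> forall t, t \in Ar -> t \notin T.
  move=> Dn t tA; apply/negP => tT.
  have tW' : t \subset W' := Ext_W TpW AW tA.
  have ne : escapes G Wg t != set0.
    apply/negP => /eqP e0; move/negbT: Dn; apply/negP/negPn/set0Pn; exists t; by rewrite inE tA e0 eqxx.
  move/negP: ne; apply; apply/eqP; apply: HInv tT tW' _.
  apply/subsetP => x xE; apply/negPn/negP => xd.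
  have xW' : x \in W' by move: xE; rewrite escapesE inE xd => /andP[-> _].
  have : x \in escapes G W' t by move: xE; rewrite !escapesE xW' => /andP[_ ->].
  by rewrite (escW' t tA) inE.
case: ifP => [Dne|Dn].
  set D := [set t in Ar | escapes G Wg t == set0] in Dne *.
  have := chTP Dne; rewrite inE => /andP[tA _].
  have [tne _ _] := Ext_ok chP TpW AW Tok HA Htot tA.
  eexists; split; first by reflexivity.
  split => //.
  - by move: cost Kb; lia.
  - by rewrite tne /=; apply: subset_trans (Ext_W TpW AW tA) W'Wg.
have Wdiff : Wg :\: (dom :|: Zr) = W' :\: Zr by rewrite setDDl.
have ZW' : Zr \subset W' := Zf_W G ch a wit TpW AW.
have A0Z : A0 \subset Zr := Zf_A G ch a W' T' wit A0.
have v0A : v0 \in A0 by rewrite inE v0W pv0 eqxx.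
have o1 : total G (Wg :\: (dom :|: Zr)) by rewrite Wdiff; exact: total_diff Htot.
have o2 : Inv Wg T (dom :|: Zr).
  move=> t tT; rewrite Wdiff => tsub esub.
  have tW' : t \subset W' := subset_trans tsub (subsetDl _ _).
  have tZ : forall x, x \in t -> x \notin Zr.
    by move=> x xt; have := subsetP tsub x xt; rewrite inE => /andP[].
  case: (boolP (escapes G Wg t :&: Zr == set0)) => [e0|/set0Pn [e]].
    apply: HInv tT tW' _; apply/subsetP => x xE.
    have := subsetP esub x xE; rewrite in_setU => /orP[//|xZ].
    by move/eqP/setP: e0 => /(_ x); rewrite in_setI xE xZ in_set0.
  rewrite in_setI => /andP[eE eZ].
  move: (eE); rewrite escapesE => /andP[eWg /andP[et /exists_inP[u ut /andP[ou eu]]]].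
  have uW' := subsetP tW' u ut.
  have uZ := tZ u ut.
  have eW' := subsetP ZW' e eZ.
  have := Zf_std uW' uZ.
  case: ifP => oua h.
    move/eqP/setP: h => /(_ e); rewrite in_setI in_set0 eZ andbT.
    by rewrite inE eW' eu.
  have od : odd (maxpr G t) == a := bool3 ou (negbT oua).
  have tT' : t \in T' by rewrite inE tT tW'.
  have escne : escapes G W' t != set0.
    apply/set0Pn; exists e; move: eE; rewrite !escapesE eW' => /andP[_ ->] //.
  have escsub : escapes G W' t \subset Zr.
    apply/subsetP => x; rewrite escapesE => /andP[xW' rest].
    have xE : x \in escapes G Wg t by rewrite escapesE (subsetP W'Wg x xW') rest.
    have := subsetP esub x xE; rewrite in_setU => /orP[xd|//].
    by move: xW'; rewrite inE xd.
  have := Zf_tang tT' od escne escsub.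
  by move/subsetP => /(_ u ut); rewrite (negbTE uZ).
have o4 : wit_ok (Y :|: Ar) (upd_wit witY Ar sr).
  move=> t tin; rewrite /upd_wit; case: ifP => tA.
    exact: (Ext_ok chP TpW AW Tok HA Htot tA).
  by move: tin; rewrite in_setU tA orbF; exact: HwY.
have o5 : forall t, t \in Y :|: Ar -> t \subset Wg.
  move=> t; rewrite in_setU => /orP[tY|tA]; first exact: HYW.
  exact: subset_trans (Ext_W TpW AW tA) W'Wg.
have o6 : #|Wg :\: (dom :|: Zr)| < k.
  rewrite Wdiff.
  have pr : W' :\: Zr \proper W'.
    rewrite properEneq subsetDl andbT; apply/eqP => E.
    by move/setP: E => /(_ v0); rewrite in_setD v0W (subsetP A0Z v0 v0A).
  by apply: leq_trans (proper_card pr) _.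
have o7 : forall v, v \in Wg :\: (dom :|: Zr) -> prio G v < maxpr G W'.
  rewrite Wdiff => v; rewrite in_setD => /andP[vZ vW].
  rewrite ltn_neqAle maxpr_le // andbT; apply/eqP => pv.
  by move: vZ; rewrite (subsetP A0Z) // inE vW pv eqxx.
have [r [Er Pr]] := IH _ _ _ (c + tattr_cost G W' T' + extract_cost G W' + esc_cost G Wg Ar) _ o1 o2 Hwit o4 o5 o6 o7 Hl.
exists r; split; first exact: Er.
have bK : (maxpr G W').+1 * K <= b * K by rewrite leq_mul2r blt orbT.
have cst : forall c'', c'' <= c + tattr_cost G W' T' + extract_cost G W' + esc_cost G Wg Ar + maxpr G W' * K -> c'' <= c + b * K.
  move=> c'' h; apply: leq_trans h _; move: cost bK.
  set X := tattr_cost G W' T'; set Y1 := extract_cost G W'; set Z1 := esc_cost G Wg Ar.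
  set p := maxpr G W'; rewrite mulSn; clearbody X Y1 Z1 p K; lia.
case: r Er Pr => [Y' wY' t c''|Y' wY' c''] _ [s1 s2 s3 s4 s5].
  split; [exact: subset_trans (subsetUl Y Ar) s1 | exact: s2 | exact: s3 | exact: cst | exact: s5].
split; [exact: subset_trans (subsetUl Y Ar) s1 | exact: s2 | exact: s3 | exact: cst | ].
move=> _; case: (boolP (W' :\: Zr == set0)) => [/eqP E|NE']; last first.
  by apply: s5; rewrite Wdiff.
have ZrW : Zr = W'.
  apply/eqP; rewrite eqEsubset ZW' /=; apply/subsetP => x xW; apply/negPn/negP => xZ.
  by move/setP: E => /(_ x); rewrite in_setD xZ xW in_set0.
have := Ext_full chP Tok Htot NE ZrW; rewrite -ArE => /set0Pn [t tA].
exists t; first by apply: (subsetP s1); rewrite in_setU tA orbT.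
exact: notT Dn t tA.
Qed.
End Algo.


Section Algo2.
Variables (V : finType) (G : game V) (ch : V -> {set V} -> V) (chT : {set {set V}} -> {set V}).
Hypothesis chP : forall v S, S != set0 -> ch v S \in S.
Hypothesis chTP : forall D, D != set0 -> chT D \in D.
Notation wit_ok := (wit_ok G).
Notation Inv := (Inv G).
Definition R0 d l := d * (l.+3 * (#|V| + nedges G setT)) + l * #|V|.

Lemma searchS k (Wg : {set V}) (T : {set {set V}}) wit c (learned : {set {set V}}) :
  search G ch chT k.+1 Wg T wit c learned =
    match sweep G ch chT k.+1 Wg T wit set0 set0 (fun _ _ => None) 0 with
    | None => None
    | Some (SDom Y witY t c1) =>
        let: (T2, wit2) := Defs.merge T wit Y witY in
        Some (T2, wit2, t, c + c1 + merge_cost Y, learned :|: Y)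
    | Some (SDone Y witY c1) =>
        let: (T2, wit2) := Defs.merge T wit Y witY in
        search G ch chT k Wg T2 wit2 (c + c1 + merge_cost Y) (learned :|: Y)
    end.
Proof. by []. Qed.

Lemma search_ok (Wg : {set V}) (d k : nat) : forall (T : {set {set V}}) (wit : {set V} -> strat V) (c : nat) (learned : {set {set V}}),
  total G Wg -> Wg != set0 -> T = [set t in learned | t \subset Wg] -> wit_ok T wit ->
  #|V| + (#|{set V}| - #|learned|) < k ->
  (forall v, v \in Wg -> prio G v < d) ->
  exists T1 wit1 dm c1 l1, search G ch chT k Wg T wit c learned = Some (T1, wit1, dm, c1, l1) /\
    [/\ learned \subset l1, T1 = [set t in l1 | t \subset Wg], wit_ok T1 wit1, (dm != set0) && (dm \subset Wg) &
       forall l, #|l1| <= l -> c1 + R0 d l * #|learned| <= c + R0 d l * #|l1| + R0 d l].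
Proof.
elim: k => [|k IH] T wit c learned Htot Hne TL Hwit Hk Hd //.
have Htot' : total G (Wg :\: set0) by rewrite setD0.
have HInv : Inv Wg T set0.
  by move=> t _ _ sub; apply/eqP; rewrite -subset0.
have Hw0 : wit_ok set0 (fun _ _ => None) by move=> t; rewrite in_set0.
have HY0 : forall t, t \in (set0 : {set {set V}}) -> t \subset Wg by move=> t; rewrite in_set0.
have Hk' : #|Wg :\: set0| < k.+1.
  rewrite setD0; apply: leq_ltn_trans (max_card _) _; apply: leq_ltn_trans Hk; exact: leq_addr.
have Hd' : forall v, v \in Wg :\: set0 -> prio G v < d by move=> v; rewrite setD0; exact: Hd.
have TLsub : T \subset learned by rewrite TL; apply/subsetP => t; rewrite inE => /andP[].
have [r [Er Pr]] := sweep_ok chP chTP 0 Htot' HInv Hwit Hw0 HY0 Hk' Hd' (leqnn #|T|).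
have costr : forall l, #|T| <= l -> forall c1, (match r with SDom _ _ _ c' => c' | SDone _ _ c' => c' end) = c1 ->
     c1 <= d * (l.+3 * (#|V| + nedges G setT)).
  move=> l Tl c1 Ec1.
  have [r' [Er' Pr']] := sweep_ok chP chTP 0 Htot' HInv Hwit Hw0 HY0 Hk' Hd' Tl.
  rewrite Er in Er'; case: Er' => Er'; subst r'.
  by case: r Er Pr Ec1 Pr' => [Y witY t c'|Y witY c'] _ _ <- [_ _ _ h _]; rewrite add0n in h.
rewrite searchS Er.
case: r Er Pr costr => [Y witY t c1|Y witY c1] _ [s1 s2 s3 s4 s5] costr /=.
- have mT : T :|: Y = [set t in learned :|: Y | t \subset Wg].
    apply/setP => u; rewrite TL !inE; case: (boolP (u \in Y)) => tY.
      by rewrite !orbT (s3 u tY).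
    by rewrite !orbF.
  have mW : wit_ok (T :|: Y) (fun t0 => if t0 \in T then wit t0 else witY t0).
    move=> t0; rewrite in_setU; case: ifP => tT /= h; first exact: Hwit.
    exact: s2.
  have cY : forall l, #|learned :|: Y| <= l -> c1 + merge_cost Y <= R0 d l.
    move=> l hl; rewrite /R0; apply: leq_add.
      apply: costr (erefl _); apply: leq_trans hl; apply: leq_trans (subset_leq_card TLsub) _.
      by apply: subset_leq_card; exact: subsetUl.
    apply: leq_trans (merge_cost_le Y) _; rewrite leq_mul2r; apply/orP; right.
    by apply: leq_trans hl; apply: subset_leq_card; exact: subsetUr.
  exists (T :|: Y), (fun t0 => if t0 \in T then wit t0 else witY t0), t, (c + c1 + merge_cost Y), (learned :|: Y).
  split => //; split => //; first exact: subsetUl.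
  move=> l hl.
  have h1 := cY l hl.
  have h2 : R0 d l * #|learned| <= R0 d l * #|learned :|: Y|.
    by rewrite leq_mul2l; apply/orP; right; apply: subset_leq_card; exact: subsetUl.
  move: h1 h2; set R := R0 d l; set x := R * #|learned|; set y := R * _; clearbody R x y; lia.
- have mT : T :|: Y = [set t in learned :|: Y | t \subset Wg].
    apply/setP => u; rewrite TL !inE; case: (boolP (u \in Y)) => tY.
      by rewrite !orbT (s3 u tY).
    by rewrite !orbF.
  have mW : wit_ok (T :|: Y) (fun t0 => if t0 \in T then wit t0 else witY t0).
    move=> t0; rewrite in_setU; case: ifP => tT /= h; first exact: Hwit.
    exact: s2.
  have cY : forall l, #|learned :|: Y| <= l -> c1 + merge_cost Y <= R0 d l.
    move=> l hl; rewrite /R0; apply: leq_add.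
      apply: costr (erefl _); apply: leq_trans hl; apply: leq_trans (subset_leq_card TLsub) _.
      by apply: subset_leq_card; exact: subsetUl.
    apply: leq_trans (merge_cost_le Y) _; rewrite leq_mul2r; apply/orP; right.
    by apply: leq_trans hl; apply: subset_leq_card; exact: subsetUr.
  have Hne0 : Wg :\: set0 != set0 by rewrite setD0.
  have [t0 t0Y t0T] := s5 Hne0.
  have t0L : t0 \notin learned.
    apply/negP => tL; move/negP: t0T; apply; rewrite TL inE tL; exact: s3.
  have hlt : #|learned| < #|learned :|: Y|.
    apply: proper_card; rewrite properEneq subsetUl andbT; apply/eqP => E.
    by move: t0L; rewrite E in_setU t0Y orbT.
  have hN : #|learned :|: Y| <= #|{set V}| := max_card _.
  have Hk2 : #|V| + (#|{set V}| - #|learned :|: Y|) < k.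
    move: Hk hlt hN; set N := #|{set V}|; clearbody N; lia.
  have [T1 [wit1 [dm [c0 [l1 [E1 [q1 q2 q3 q4 q5]]]]]]] :=
    IH _ _ (c + c1 + merge_cost Y) _ Htot Hne mT mW Hk2 Hd.
  exists T1, wit1, dm, c0, l1; split => //; split => //.
    exact: subset_trans (subsetUl _ _) q1.
  move=> l hl.
  have hl' : #|learned :|: Y| <= l by apply: leq_trans (subset_leq_card q1) hl.
  have h1 := cY l hl'.
  have h3 := q5 l hl.
  have h2 : R0 d l * #|learned|.+1 <= R0 d l * #|learned :|: Y| by rewrite leq_mul2l hlt orbT.
  move: h1 h2 h3; rewrite mulnS; set R := R0 d l; set x := R * #|learned|; set y := R * #|learned :|: Y|;
    set z := R * #|l1|; clearbody R x y z; lia.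
Qed.
  
Definition S0 d l := R0 d l + #|V| + nedges G setT + l * #|V|.

Lemma solve_loopS k (Wg : {set V}) (T : {set {set V}}) wit c (learned : {set {set V}}) :
  solve_loop G ch chT k.+1 Wg T wit c learned =
  if Wg == set0 then Some (c, learned) else
    match search G ch chT k.+1 Wg T wit c learned with
    | None => None
    | Some (T1, wit1, dm, c1, l1) =>
        solve_loop G ch chT k (Wg :\: (tattr G ch (odd (maxpr G dm)) Wg set0 wit1 dm).1)
          [set t in T1 | t \subset Wg :\: (tattr G ch (odd (maxpr G dm)) Wg set0 wit1 dm).1] wit1
          (c1 + #|Wg| + nedges G Wg + merge_cost T1) l1
    end.
Proof. by []. Qed.

Lemma solve_ok (d k : nat) : forall (Wg : {set V}) (T : {set {set V}}) wit c (learned : {set {set V}}),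
  total G Wg -> T = [set t in learned | t \subset Wg] -> wit_ok T wit ->
  #|Wg| + #|V| + #|{set V}| < k -> (forall v, prio G v < d) ->
  exists cost Lf, solve_loop G ch chT k Wg T wit c learned = Some (cost, Lf) /\
     learned \subset Lf /\ forall l, #|Lf| <= l ->
       cost + R0 d l * #|learned| <= c + R0 d l * #|Lf| + S0 d l * #|Wg|.
Proof.
elim: k => [|k IH] Wg T wit c learned Htot TL Hwit Hk Hd //.
rewrite solve_loopS.
case: ifP => [/eqP E|NE].
  exists c, learned; split => //; split => // l _.
  by rewrite E cards0 muln0 addn0 leq_add2l.
move/negbT: NE => NE.
have Hk' : #|V| + (#|{set V}| - #|learned|) < k.+1.
  move: Hk; set N := #|{set V}|; set n := #|V|; clearbody N n; lia.
have [T1 [wit1 [dm [c1 [l1 [E1 [q1 q2 q3 /andP[dne dsub] q5]]]]]]] :=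
  @search_ok Wg d k.+1 T wit c learned Htot NE TL Hwit Hk' (fun v _ => Hd v).
rewrite E1.
set a := odd (maxpr G dm).
have TpW : forall t, t \in (set0 : {set {set V}}) -> t \subset Wg by move=> t; rewrite in_set0.
rewrite tattr1.
set D := Zf G ch a Wg set0 wit1 dm.
have dD : dm \subset D := Zf_A G ch a Wg set0 wit1 dm.
have DW : D \subset Wg := Zf_W G ch a wit1 TpW dsub.
set Wg' := Wg :\: D.
have Htot' : total G Wg' := total_diff Htot.
have W'W : Wg' \subset Wg := subsetDl _ _.
have Wlt : #|Wg'| < #|Wg|.
  apply: proper_card; rewrite properEneq W'W andbT; apply/eqP => E.
  case/set0Pn: dne => v vd.
  by move/setP: E => /(_ v); rewrite in_setD (subsetP dD v vd) (subsetP dsub v vd).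
have TL' : [set t in T1 | t \subset Wg'] = [set t in l1 | t \subset Wg'].
  apply/setP => t; rewrite q2 !inE; case: (boolP (t \subset Wg')) => h; rewrite ?andbF ?andbT //.
  by rewrite (subset_trans h W'W) andbT.
have Hwit' : wit_ok [set t in T1 | t \subset Wg'] wit1.
  by move=> t; rewrite inE => /andP[tT _]; exact: q3.
have Hk2 : #|Wg'| + #|V| + #|{set V}| < k.
  move: Hk Wlt; set N := #|{set V}|; set n := #|V|; clearbody N n; lia.
have [cost [Lf [E2 [r1 r2]]]] := IH _ _ _ (c1 + #|Wg| + nedges G Wg + merge_cost T1) _ Htot' TL' Hwit' Hk2 Hd.
exists cost, Lf; split => //; split; first exact: subset_trans q1 r1.
move=> l hl.
have hl1 : #|l1| <= l by apply: leq_trans (subset_leq_card r1) hl.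
have h1 := r2 l hl.
have h2 := q5 l hl1.
have h3 : merge_cost T1 <= l * #|V|.
  apply: leq_trans (merge_cost_le T1) _; rewrite leq_mul2r; apply/orP; right.
  apply: leq_trans hl1; apply: subset_leq_card; rewrite q2; by apply/subsetP => t; rewrite inE => /andP[].
have h4 : #|Wg| <= #|V| := max_card _.
have h5 : nedges G Wg <= nedges G setT := nedges_le G Wg.
have h6 : S0 d l * #|Wg'|.+1 <= S0 d l * #|Wg| by rewrite leq_mul2l Wlt orbT.
move: h1 h2 h3 h4 h5 h6; rewrite mulnS /S0.
set R := R0 d l; set n := #|V|; set m := nedges G setT.
set x1 := R * #|learned|; set x2 := R * #|l1|; set x3 := R * #|Lf|.
set y1 := (R + n + m + l * n) * #|Wg'|; set y2 := (R + n + m + l * n) * #|Wg|.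
set z := l * n.
clearbody R n m x1 x2 x3 y1 y2 z; lia.
Qed.
End Algo2.

Lemma arith n m d l : n <= m -> m <= n * n -> 0 < n -> 0 < d ->
  (d * (l.+3 * (n + m)) + l * n) * l + (d * (l.+3 * (n + m)) + l * n + n + m + l * n) * n
  <= 20 * (d * n * m * l.+1 + d * n ^ 2 * l.+1 ^ 2).
Proof.
move=> nm mn n0 d0.
set L := l.+1.
have hl : l <= L by rewrite leqnSn.
have hl3 : l.+3 <= 3 * L by rewrite /L; lia.
have hnm : n + m <= 2 * m by lia.
have B1 : l.+3 * (n + m) <= 6 * (m * L).
  have := leq_mul hl3 hnm; rewrite mulnCA mulnA; lia.
have B2 : d * (l.+3 * (n + m)) <= 6 * (d * m * L).
  have := leq_mul (leqnn d) B1; lia.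
have mL : d * m * L * L <= d * n * n * L * L.
  by rewrite !leq_mul2r -!mulnA leq_mul2l mn !orbT.
have T1 : (d * (l.+3 * (n + m)) + l * n) * l <= 6 * (d * n * n * L * L) + d * n * n * L * L.
  have a1 : d * (l.+3 * (n + m)) * l <= 6 * (d * m * L * L).
    have := leq_mul B2 hl; lia.
  have a2 : l * n * l <= d * n * n * L * L.
    have h1 : l * n * l <= L * n * L by apply: leq_mul => //; apply: leq_mul.
    have h2 : L * n * L <= d * n * n * L * L.
      have : 1 * n * 1 <= d * n * n by apply: leq_mul => //; apply: leq_mul.
      move=> h; have := leq_mul (leq_mul h (leqnn L)) (leqnn L); lia.
    exact: leq_trans h1 h2.
  rewrite mulnDl; lia.
have T2 : (d * (l.+3 * (n + m)) + l * n + n + m + l * n) * n <=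
          6 * (d * n * m * L) + 2 * (d * n * n * L * L) + d * n * n * L * L + d * n * m * L.
  have a1 : d * (l.+3 * (n + m)) * n <= 6 * (d * n * m * L).
    have := leq_mul B2 (leqnn n); lia.
  have a2 : l * n * n <= d * n * n * L * L.
    have : 1 * n * n * 1 * l <= d * n * n * L * L.
      apply: leq_mul => //; apply: leq_mul => //; apply: leq_mul => //; apply: leq_mul => //.
    lia.
  have a3 : n * n <= d * n * n * L * L.
    have : 1 * n * n * 1 * 1 <= d * n * n * L * L.
      apply: leq_mul => //; apply: leq_mul => //; apply: leq_mul => //; apply: leq_mul => //.
    lia.
  have a4 : m * n <= d * n * m * L.
    have : 1 * n * m * 1 <= d * n * m * L by apply: leq_mul => //; apply: leq_mul => //; apply: leq_mul.
    lia.
  rewrite !mulnDl; lia.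
rewrite expnS expn1 expnS expn1.
move: T1 T2 mL; rewrite /L.
set P := d * n * m * l.+1; set Q := d * n * n * l.+1 * l.+1.
have -> : d * (n * n) * (l.+1 * l.+1) = Q by rewrite /Q; lia.
lia.
Qed.

Theorem lemma13 :
  exists C : nat,
  forall (V : finType) (G : game V) (d : nat)
         (ch : V -> {set V} -> V) (chT : {set {set V}} -> {set V}),
    game_total G ->
    (forall v, prio G v < d) ->
    (forall v S, S != set0 -> ch v S \in S) ->
    (forall D, D != set0 -> chT D \in D) ->
    exists k cost learned,
      solve G ch chT k = Some (cost, learned) /\
      let n := #|V| in
      let m := nedges G setT in
      let L := #|learned|.+1 in
      cost <= C * (d * n * m * L + d * n ^ 2 * L ^ 2).
Proof.
exists 20 => V G d ch chT Htot Hd chP chTP.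
have Ht : total G setT.
  move=> v _; case: (Htot v) => w e; apply/set0Pn; exists w; by rewrite inE in_setT e.
have TL : (set0 : {set {set V}}) = [set t in (set0 : {set {set V}}) | t \subset setT].
  by apply/setP => t; rewrite !inE.
have Hw : wit_ok G set0 (fun _ _ => None) by move=> t; rewrite in_set0.
have Hk : #|(setT : {set V})| + #|V| + #|{set V}| < (#|V| + #|V| + #|{set V}|).+1.
  by rewrite cardsT.
have [cost [Lf [E [_ B]]]] := solve_ok chP chTP 0 Ht TL Hw Hk Hd.
exists (#|V| + #|V| + #|{set V}|).+1, cost, Lf; split; first exact: E.
move=> /=.
have := B #|Lf| (leqnn _); rewrite cards0 muln0 addn0 add0n cardsT.
rewrite /R0 /S0.
have nm := n_le_m (G := G).
have mn := m_le_n2 G.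
case: (posnP #|V|) => n0.
  have m0 : nedges G setT = 0 by move: mn; rewrite n0; case: (nedges G setT).
  move=> h; apply: leq_trans h _; rewrite n0 m0; nia.
have d0 : 0 < d.
  case/card_gt0P: n0 => v _; exact: leq_ltn_trans (leq0n _) (Hd v).
have nm' : #|V| <= nedges G setT.
  apply: nm => v; case: (Htot v) => w e; apply/set0Pn; exists w; by rewrite inE in_setT e.
move=> h; apply: leq_trans h _.
move: mn; rewrite expnS expn1 => mn.
exact: arith.
Qed.
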